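(* In $\mathcal{V}$, for all $p,q\in P$: if $p\preccurlyeq q$ then $|S_p|\leqslant|S_q|$, and if $p\preccurlyeq^\ast q$ then $|S_p|\leqslant^\ast|S_q|$.
   Context: Work in $\mathsf{ZFA}$ (set theory with atoms) over a ground model of $\mathsf{ZFC}$ containing a doubly ordered set $\langle P,\preccurlyeq,\preccurlyeq^\ast\rangle$ (i.e. $\preccurlyeq$ a partial order on $P$, $\preccurlyeq^\ast$ a preorder on $P$, and $p\preccurlyeq q\Rightarrow p\preccurlyeq^\ast q$). Write $p\prec q$ for ($p\preccurlyeq q$ and $p\neq q$). For a quadruple $\langle x_0,x_1,x_2,x_3\rangle$ and $i<4$, $\mathrm{pr}_i(\langle x_0,x_1,x_2,x_3\rangle)=x_i$. For a set $S$, $\mathscr{S}(S)$ is the set of permutations of $S$. Define recursively $A_0=\{\langle0,p,\varnothing,k\rangle\mid p\in P,k\in\omega\}$ and $A_{n+1}=A_n\cup\{\langle n+1,q,a,0\rangle\mid q\in P,a\in A_n,\mathrm{pr}_1(a)\prec q\}\cup\{\langle n+1,q,a,k\rangle\mid q\in P,a\in A_n,\mathrm{pr}_1(a)\not\preccurlyeq q,\mathrm{pr}_1(a)\preccurlyeq^\ast q,k\in\omega\}$; let $A=\bigcup_{n}A_n$, whose elements serve as the atoms. Define groups $\mathcal{G}_n\subseteq\mathscr{S}(A_n)$: $\mathcal{G}_0=\{f\in\mathscr{S}(A_0)\mid \mathrm{pr}_1(f(a))=\mathrm{pr}_1(a)\text{ for all }a\in A_0\}$; for $f\in\mathscr{S}(A_{n+1})$,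 $f\in\mathcal{G}_{n+1}$ iff $f{\upharpoonright}A_n\in\mathcal{G}_n$ and for all $b\in A_{n+1}\setminus A_n$, $\mathrm{pr}_1(f(b))=\mathrm{pr}_1(b)$ and $\mathrm{pr}_2(f(b))=f(\mathrm{pr}_2(b))$. Let $\mathcal{G}=\{\pi\in\mathscr{S}(A)\mid \pi{\upharpoonright}A_n\in\mathcal{G}_n\text{ for all }n\}$. $\mathcal{V}$ is the permutation model determined by $\mathcal{G}$ and finite supports: $x\in\mathcal{V}$ iff $x\subseteq\mathcal{V}$ and there is a finite $B\subseteq A$ (a support of $x$) such that every $\pi\in\mathcal{G}$ fixing $B$ pointwise fixes $x$. For $p\in P$, $S_p=\{a\in A\mid \mathrm{pr}_1(a)=p\}$. For cardinals, $|X|\leqslant|Y|$ means there is an injection $X\to Y$, and $|X|\leqslant^\ast|Y|$ means there is a surjection from a subset of $Y$ onto $X$ (both computed in $\mathcal{V}$). *)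

(* Defs.v *)
(* Permutation model V of ZFA built from a doubly ordered set
   <P, le, les>.  Atoms are represented by an inductive type of quadruples. *)
From Stdlib Require Import List.
Import ListNotations.

(* A quadruple <0,p,emptyset,k>  is  Base p k ;
   a quadruple <n+1,q,a,k>       is  Ext n q a k  (first component n+1). *)
Inductive atom (P : Type) : Type :=
| Base (p : P) (k : nat)
| Ext (n : nat) (q : P) (a : atom P) (k : nat).
Arguments Base {P} p k.
Arguments Ext {P} n q a k.

Definition pr0 {P} (x : atom P) : nat :=
  match x with Base _ _ => 0 | Ext n _ _ _ => S n end.
Definition pr1 {P} (x : atom P) : P :=
  match x with Base p _ => p | Ext _ q _ _ => q end.
(* pr2 : None stands for the empty set (third component of level-0 atoms). *)
Definition pr2 {P} (x : atom P) : option (atom P) :=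
  match x with Base _ _ => None | Ext _ _ a _ => Some a end.
Definition pr3 {P} (x : atom P) : nat :=
  match x with Base _ k => k | Ext _ _ _ k => k end.

Section Model.
Variable P : Type.
Variable le : P -> P -> Prop.
Variable les : P -> P -> Prop.

Definition lt_strict (p q : P) : Prop := le p q /\ p <> q.

Fixpoint inA (n : nat) (x : atom P) : Prop :=
  match n with
  | 0 => exists p k, x = Base p k
  | S m =>
      inA m x
      \/ (exists q a, inA m a /\ lt_strict (pr1 a) q /\ x = Ext m q a 0)
      \/ (exists q a k, inA m a /\ ~ le (pr1 a) q /\ les (pr1 a) q
                        /\ x = Ext m q a k)
  end.

Definition inAll (x : atom P) : Prop := exists n, inA n x.

Definition perm_on (D : atom P -> Prop) (f : atom P -> atom P) : Prop :=
  (forall x, D x -> D (f x)) /\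
  (forall x y, D x -> D y -> f x = f y -> x = y) /\
  (forall y, D y -> exists x, D x /\ f x = y).

Fixpoint Gn (n : nat) (f : atom P -> atom P) : Prop :=
  match n with
  | 0 => perm_on (inA 0) f /\ (forall a, inA 0 a -> pr1 (f a) = pr1 a)
  | S m => perm_on (inA (S m)) f /\ Gn m f /\
      (forall b, inA (S m) b -> ~ inA m b ->
         pr1 (f b) = pr1 b /\ pr2 (f b) = option_map f (pr2 b))
  end.

Definition inG (f : atom P -> atom P) : Prop :=
  perm_on inAll f /\ forall n, Gn n f.

Definition Sp (p : P) (x : atom P) : Prop := inAll x /\ pr1 x = p.

Definition rel_in_V (R : atom P -> atom P -> Prop) : Prop :=
  (forall x y, R x y -> inAll x /\ inAll y) /\
  exists B : list (atom P), (forall b, In b B -> inAll b) /\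
    forall f, inG f -> (forall b, In b B -> f b = b) ->
      forall x y, inAll x -> inAll y -> (R x y <-> R (f x) (f y)).

Definition is_function (X Y : atom P -> Prop) (R : atom P -> atom P -> Prop)
  : Prop :=
  (forall x y, R x y -> X x /\ Y y) /\
  (forall x, X x -> exists y, R x y) /\
  (forall x y y', R x y -> R x y' -> y = y').

Definition card_le_V (X Y : atom P -> Prop) : Prop :=
  exists R, rel_in_V R /\ is_function X Y R /\
    (forall x x' y, R x y -> R x' y -> x = x').

Definition card_le_star_V (X Y : atom P -> Prop) : Prop :=
  exists R, rel_in_V R /\
    (exists D : atom P -> Prop, (forall y, D y -> Y y) /\ is_function D X R) /\
    (forall x, X x -> exists y, R y x).

End Model.

Definition partial_order {P} (r : P -> P -> Prop) : Prop :=
  (forall p, r p p) /\ (forall p q, r p q -> r q p -> p = q) /\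
  (forall p q s, r p q -> r q s -> r p s).
Definition preorder {P} (r : P -> P -> Prop) : Prop :=
  (forall p, r p p) /\ (forall p q s, r p q -> r q s -> r p s).

Arguments inA {P} le les n x.
Arguments inAll {P} le les x.
Arguments Gn {P} le les n f.
Arguments inG {P} le les f.
Arguments Sp {P} le les p x.
Arguments rel_in_V {P} le les R.
Arguments card_le_V {P} le les X Y.
Arguments card_le_star_V {P} le les X Y.

(* Main.v *)
Require Import Defs.
From Stdlib Require Import List Lia Classical.

Section Aux.
Variable P : Type.
Variable le les : P -> P -> Prop.

Lemma inA_S n x : inA le les n x -> inA le les (S n) x.
Proof. intro H; simpl; left; exact H. Qed.

Lemma inA_mono n m x : n <= m -> inA le les n x -> inA le les m x.
Proof. induction 1; auto using inA_S. Qed.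

Lemma inA_pr0 n x : inA le les n x -> inA le les (pr0 x) x /\ pr0 x <= n.
Proof.
  revert x; induction n; intros x H.
  - destruct H as [p [k ->]]; simpl; split; [exists p, k; reflexivity| lia].
  - pose proof H as H0. destruct H as [H|[[q [a [H1 [H2 ->]]]]|[q [a [k [H1 [H2 [H3 ->]]]]]]]].
    + destruct (IHn x H); split; [assumption|lia].
    + simpl in *; split; [exact H0|lia].
    + simpl in *; split; [exact H0|lia].
Qed.

Lemma inA_iff x m : inAll le les x -> (inA le les m x <-> pr0 x <= m).
Proof.
  intros [n Hn]; split; intro H.
  - apply (inA_pr0 m x H).
  - apply (inA_mono (pr0 x)); [exact H| apply (inA_pr0 n x Hn)].
Qed.

Lemma inA_Ext n m q a k : inA le les n (Ext m q a k) ->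
  inA le les m a /\ ((lt_strict P le (pr1 a) q /\ k = 0) \/
                     (~ le (pr1 a) q /\ les (pr1 a) q)).
Proof.
  induction n; intro H.
  - destruct H as [? [? H]]; discriminate.
  - destruct H as [H|[[q' [a' [H1 [H2 E]]]]|[q' [a' [k' [H1 [H2 [H3 E]]]]]]]].
    + auto.
    + injection E; intros; subst; auto.
    + injection E; intros; subst; auto.
Qed.

Lemma Gn_perm n f : Gn le les n f -> perm_on P (inA le les n) f.
Proof. destruct n; simpl; tauto. Qed.

Lemma G_pr0 f x : inG le les f -> inAll le les x -> pr0 (f x) = pr0 x.
Proof.
  intros [[HA [Hinj Hsur]] HG] Hx.
  assert (Hfx : inAll le les (f x)) by auto.
  pose proof (proj2 (inA_iff x (pr0 x) Hx) (PeanoNat.Nat.le_refl _)) as H0.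
  destruct (Gn_perm _ _ (HG (pr0 x))) as [Hm _].
  pose proof (proj1 (inA_iff (f x) _ Hfx) (Hm _ H0)).
  destruct (pr0 x) as [|m'] eqn:E; [lia|].
  destruct (Compare_dec.le_lt_dec (pr0 (f x)) m') as [Hl|Hl]; [|lia].
  exfalso.
  pose proof (proj2 (inA_iff (f x) m' Hfx) Hl) as Hm'.
  destruct (Gn_perm _ _ (HG m')) as [_ [_ Hs]].
  destruct (Hs _ Hm') as [z [Hz Hfz]].
  assert (z = x) by (apply Hinj; [exists m'; exact Hz|exact Hx|exact Hfz]).
  subst z. apply (inA_iff x m' Hx) in Hz. lia.
Qed.

Lemma G_pr12 f x : inG le les f -> inAll le les x ->
  pr1 (f x) = pr1 x /\ pr2 (f x) = option_map f (pr2 x).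
Proof.
  intros HG Hx. pose proof (G_pr0 f x HG Hx) as E0.
  destruct HG as [HA HGn].
  destruct x as [p k | m q a k].
  - destruct (HGn 0) as [_ H1]. split.
    + apply H1; exists p, k; reflexivity.
    + destruct (f (Base p k)); simpl in *; [reflexivity|discriminate].
  - assert (H1 : inA le les (S m) (Ext m q a k)) by (apply (inA_iff _ _ Hx); simpl; lia).
    assert (H2 : ~ inA le les m (Ext m q a k)) by
      (intro H; apply (inA_iff _ _ Hx) in H; simpl in H; lia).
    destruct (HGn (S m)) as [_ [_ H3]]. apply H3; assumption.
Qed.

Definition Rel (p q : P) (y x : atom P) : Prop :=
  Sp le les p x /\ inAll le les y /\ pr1 y = q /\ pr2 y = Some x /\ pr0 y = S (pr0 x).

Lemma Rel_inv p q f x y : inG le les f -> inAll le les x -> inAll le les y ->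
  (Rel p q y x <-> Rel p q (f y) (f x)).
Proof.
  intros HG Hx Hy.
  destruct (G_pr12 f x HG Hx) as [Ex1 Ex2].
  destruct (G_pr12 f y HG Hy) as [Ey1 Ey2].
  pose proof (G_pr0 f x HG Hx) as Ex0.
  pose proof (G_pr0 f y HG Hy) as Ey0.
  destruct HG as [[HA [Hinj _]] _] .
  unfold Rel, Sp. split.
  - intros [[_ Hp] [_ [Hq [H2 H0]]]].
    repeat split; auto; try congruence. rewrite Ey2, H2; reflexivity.
  - intros [[_ Hp] [_ [Hq [H2 H0]]]].
    repeat split; auto; try congruence.
    rewrite Ey2 in H2. destruct (pr2 y) as [a|] eqn:Ea; simpl in H2; [|discriminate].
    injection H2; intro Hfa.
    assert (inAll le les a).
    { destruct y as [|m q' a' k]; simpl in Ea; [discriminate|].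
      injection Ea; intros ->. destruct Hy as [n Hn].
      exists m; apply (inA_Ext n m q' a k Hn). }
    f_equal; apply Hinj; auto.
Qed.

Lemma Rel_shape p q x y : le p q -> Rel p q y x -> y = Ext (pr0 x) q x 0.
Proof.
  intros Hpq [[_ Hp] [[n Hy] [Hq [H2 H0]]]].
  destruct y as [|m q' a k]; simpl in *; [discriminate|].
  injection H2; injection H0; intros; subst.
  destruct (inA_Ext _ _ _ _ _ Hy) as [_ [[_ ->]|[Hn _]]]; [reflexivity|contradiction].
Qed.

Lemma Rel_ex p q x : p <> q -> les p q -> (le p q \/ ~ le p q) ->
  Sp le les p x -> Rel p q (Ext (pr0 x) q x 0) x.
Proof.
  intros Hne Hles Hd [Hx Hp].
  unfold Rel, Sp; repeat split; auto.
  exists (S (pr0 x)); simpl; right.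
  pose proof (proj2 (inA_iff x (pr0 x) Hx) (PeanoNat.Nat.le_refl _)).
  destruct Hd as [Hl|Hl].
  - left; exists q, x; repeat split; auto; rewrite Hp; auto.
  - right; exists q, x, 0; repeat split; auto; rewrite Hp; auto.
Qed.

End Aux.

Theorem lemma2p1 (P : Type) (le les : P -> P -> Prop)
  (Hle : partial_order le) (Hles : preorder les)
  (Hsub : forall p q, le p q -> les p q) :
  forall p q : P,
    (le p q -> card_le_V le les (Sp le les p) (Sp le les q)) /\
    (les p q -> card_le_star_V le les (Sp le les p) (Sp le les q)).
Proof.
  intros p q. destruct (classic (p = q)) as [<-|Hne].
  - assert (HR : rel_in_V le les (fun x y => Sp le les p x /\ y = x)).
    { split.
      - intros x y [[Hx _] ->]; auto.
      - exists nil; split; [intros b []|].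
        intros f HG _ x y Hx Hy.
        destruct (G_pr12 _ le les f x HG Hx) as [E1 _].
        destruct HG as [[HA [Hinj _]] _].
        unfold Sp; split.
        + intros [[_ Hp] ->]; repeat split; auto; congruence.
        + intros [[_ Hp] Heq]; repeat split; auto; try congruence.
          all: apply Hinj; auto. }
    split; intros _.
    + exists (fun x y => Sp le les p x /\ y = x); split; [exact HR|split].
      * split; [intros x y [H ->]; auto|split; [intros x H; eauto|]].
        intros x y y' [_ ->] [_ ->]; reflexivity.
      * intros x x' y [_ ->] [_ ->]; reflexivity.
    + exists (fun x y => Sp le les p x /\ y = x); split; [exact HR|split].
      * exists (Sp le les p); split; [auto|].
        split; [intros x y [H ->]; auto|split; [intros x H; eauto|]].
        intros x y y' [_ ->] [_ ->]; reflexivity.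
      * intros x H; eauto.
  - split; intro Hpq.
    + exists (fun x y => Rel P le les p q y x). split; [|split].
      * split.
        -- intros x y [[Hx _] [Hy _]]; auto.
        -- exists nil; split; [intros b []|].
           intros f HG _ x y Hx Hy; apply Rel_inv; auto.
      * split; [|split].
        -- intros x y [Hx [Hy [Hq _]]]; split; [auto|split; auto].
        -- intros x Hx; eexists; apply Rel_ex; auto.
        -- intros x y y' H1 H2.
           rewrite (Rel_shape _ _ _ _ _ _ _ Hpq H1), (Rel_shape _ _ _ _ _ _ _ Hpq H2); reflexivity.
      * intros x x' y (_ & _ & _ & H1 & _) (_ & _ & _ & H2 & _); congruence.
    + exists (fun y x => Rel P le les p q y x). split; [|split].
      * split.
        -- intros x y [[Hy _] [Hx _]]; auto.
        -- exists nil; split; [intros b []|].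
           intros f HG _ x y Hx Hy; apply Rel_inv; auto.
      * exists (fun y => exists x, Rel P le les p q y x); split.
        -- intros y [x (_ & Hy & Hq & _)]; split; auto.
        -- split; [|split].
           ++ intros y x H; split; [eauto|apply H].
           ++ auto.
           ++ intros y x x' (_ & _ & _ & H1 & _) (_ & _ & _ & H2 & _); congruence.
      * intros x Hx; eexists; apply Rel_ex; auto; apply classic.
Qed.
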